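(* Let $\beta\in[0,1]$ and $f\in\mathcal{A}_{\beta}$ with $f(z)=z+\sum_{n=2}^{\infty}a_nz^n$. Then $$|a_3-a_2^2|\le\frac{2}{3-2\beta}.$$ The inequality is sharp, with equality for the function $f_2\in\mathcal{A}_\beta$ defined by $\beta f_2(z)/z+(1-\beta)f_2'(z)=\frac{1+z^2}{1-z^2}$.
   Context: $\mathbb{D}=\{z\in\mathbb{C}:|z|<1\}$. For $\beta\in[0,1]$, $\mathcal{A}_{\beta}$ is the set of analytic functions $f$ on $\mathbb{D}$ with $f(0)=0$, $f'(0)=1$ (so $f(z)=z+\sum_{n\ge2}a_nz^n$) such that $\operatorname{Re}\big(\beta f(z)/z+(1-\beta)f'(z)\big)>0$ for all $z\in\mathbb{D}$. *)

(* Defs.v *)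
From Stdlib Require Import Reals.
From Coquelicot Require Import Coquelicot.
Open Scope R_scope.

Definition in_unit_disk (z : C) : Prop := Cmod z < 1.

Definition taylor_on_disk (f : C -> C) (a : nat -> C) : Prop :=
  forall z : C, in_unit_disk z -> is_pseries a z (f z).

Definition normalized_analytic (f : C -> C) : Prop :=
  exists a : nat -> C, taylor_on_disk f a /\ a 0%nat = 0%C /\ a 1%nat = 1%C.

(* The quantity beta f(z)/z + (1-beta) f'(z) is required to
   have positive real part at every z in the disk; at z = 0 the value of this
   (removable) expression is beta*1 + (1-beta)*1 = 1, so the condition there is
   automatic and we impose it for z <> 0.  f'(z) is the complex derivative. *)
Definition A_beta (beta : R) (f : C -> C) : Prop :=
  normalized_analytic f /\
  forall z : C, in_unit_disk z -> z <> 0%C ->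
    exists d : C, is_derive (K := C_AbsRing) (V := C_NormedModule) f z d /\
      0 < Re (RtoC beta * (f z / z) + RtoC (1 - beta) * d)%C.

(* Main.v *)
Require Import Defs.
From Stdlib Require Import Reals Lra Lia ClassicalEpsilon.
From Coquelicot Require Import Coquelicot.
Open Scope R_scope.


Lemma pow_n_Cpow (z : C) (n : nat) : pow_n (K := C_AbsRing) z n = Cpow z n.
Proof. induction n; simpl; [reflexivity| rewrite IHn; reflexivity]. Qed.

Lemma series_norm_le (a : nat -> C) (la : C) (b : nat -> R) (lb : R) :
  is_series a la -> is_series b lb -> (forall n, Cmod (a n) <= b n) -> Cmod la <= lb.
Proof.
  intros Ha Hb Hab.
  assert (P : forall n, Cmod (sum_n a n) <= sum_n b n).
  { induction n.
    - rewrite !sum_O. apply Hab.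
    - rewrite !sum_Sn. eapply Rle_trans. apply Cmod_triangle.
      apply Rplus_le_compat. exact IHn. apply Hab. }
  assert (L1 : is_lim_seq (fun n => Cmod (sum_n a n)) (Cmod la)).
  { unfold is_lim_seq. eapply filterlim_comp. exact Ha.
    pose proof (filterlim_norm (K:=C_AbsRing) (V:=C_NormedModule) la) as H.
    exact H. }
  assert (L2 : is_lim_seq (sum_n b) lb) by exact Hb.
  pose proof (is_lim_seq_le _ _ _ _ P L1 L2). simpl in H. exact H.
Qed.


Lemma is_series_zero {K : AbsRing} {V : NormedModule K} :
  is_series (fun _ : nat => (zero : V)) zero.
Proof.
  unfold is_series.
  apply filterlim_ext with (fun _ => zero).
  - intro n. induction n. rewrite sum_O; reflexivity.
    rewrite sum_Sn, <- IHn, plus_zero_l. reflexivity.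
  - apply filterlim_const.
Qed.

Lemma lim_ratio : is_lim_seq (fun n => (INR n + 2) / (INR n + 1)) 1.
Proof.
  assert (H1 : is_lim_seq (fun n => / (INR n + 1)) 0).
  { assert (H : is_lim_seq (fun n => INR n + 1) p_infty).
    { apply is_lim_seq_ext with (fun n => INR (S n)).
      intro; rewrite S_INR; reflexivity.
      apply -> is_lim_seq_incr_1. apply is_lim_seq_INR. }
    pose proof (is_lim_seq_inv _ _ H) as H'. simpl in H'. apply H'. discriminate. }
  apply is_lim_seq_ext with (fun n => 1 + / (INR n + 1)).
  - intro n. pose proof (pos_INR n). field. lra.
  - pose proof (is_lim_seq_plus' _ _ 1 0 (is_lim_seq_const 1) H1) as H. rewrite Rplus_0_r in H. exact H.
Qed.

Lemma ex_series_poly_geom (q : R) : 0 < q < 1 ->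
  ex_series (fun n => (INR n + 1)^2 * q^n).
Proof.
  intros Hq.
  apply ex_series_ext with (fun n => Rabs ((INR n + 1)^2 * q^n)).
  { intro n. apply Rabs_pos_eq. apply Rmult_le_pos. apply pow2_ge_0. apply pow_le; lra. }
  apply ex_series_DAlembert with q. lra.
  { intro n. apply Rmult_integral_contrapositive. split.
    apply pow_nonzero. pose proof (pos_INR n); lra. apply pow_nonzero; lra. }
  apply is_lim_seq_ext with (fun n => ((INR n + 2) / (INR n + 1)) * ((INR n + 2) / (INR n + 1)) * q).
  { intro n. rewrite S_INR. pose proof (pos_INR n).
    assert (E : (INR n + 1 + 1) ^ 2 * q ^ S n / ((INR n + 1) ^ 2 * q ^ n) =
      (INR n + 2) / (INR n + 1) * ((INR n + 2) / (INR n + 1)) * q).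
    { simpl. field. split. apply Rgt_not_eq; lra. apply pow_nonzero; lra. }
    rewrite E. rewrite Rabs_pos_eq. reflexivity.
    apply Rmult_le_pos; [|lra]. apply Rmult_le_pos; apply Rlt_le; apply Rdiv_lt_0_compat; lra. }
  pose proof (is_lim_seq_mult' _ _ _ _ (is_lim_seq_mult' _ _ _ _ lim_ratio lim_ratio) (is_lim_seq_const q)) as H.
  rewrite !Rmult_1_l in H. exact H.
Qed.


Fixpoint rsum (f : nat -> R) (n : nat) : R :=
  match n with O => 0 | S m => rsum f m + f m end.

Lemma rsum_nonneg f n : (forall k, 0 <= f k) -> 0 <= rsum f n.
Proof. intro H; induction n; simpl. lra. specialize (H n). lra. Qed.

Lemma rsum_ge f n k : (forall k, 0 <= f k) -> (k < n)%nat -> f k <= rsum f n.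
Proof.
  intros H; induction n; intro Hk. lia. simpl.
  destruct (Nat.eq_dec k n). subst. pose proof (rsum_nonneg f n H). lra.
  assert (k < n)%nat by lia. specialize (IHn H0). specialize (H n). lra.
Qed.

Lemma Csub_add (x y : C) : Cplus (Cminus x y) y = x. Proof. ring. Qed.
Lemma Cadd_sub (x y : C) : Cplus (Cplus x y) (Copp x) = y. Proof. ring. Qed.

Lemma partial_bounded (u : nat -> C) (l : C) : is_series u l ->
  exists M, forall n, Cmod (sum_n u n) <= M.
Proof.
  intro Hu. unfold is_series in Hu.
  pose proof (proj1 (filterlim_locally _ l) Hu (mkposreal 1 Rlt_0_1)) as [N HN].
  exists (Cmod l + norm_factor (K:=C_AbsRing) (V:=C_NormedModule) + rsum (fun k => Cmod (sum_n u k)) N).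
  intro n.
  pose proof (rsum_nonneg (fun k => Cmod (sum_n u k)) N (fun k => Cmod_ge_0 _)).
  pose proof (norm_factor_gt_0 (K:=C_AbsRing) (V:=C_NormedModule)).
  destruct (Compare_dec.le_lt_dec N n) as [h|h].
  - specialize (HN n h). apply (norm_compat2 (K:=C_AbsRing) (V:=C_NormedModule)) in HN. simpl in HN.
    change (norm (minus (sum_n u n) l)) with (Cmod (Cminus (sum_n u n) l)) in HN.
    pose proof (Cmod_triangle (Cminus (sum_n u n) l) l).
    rewrite Csub_add in H1.
    pose proof (Cmod_ge_0 l). lra.
  - pose proof (rsum_ge (fun k => Cmod (sum_n u k)) N n (fun k => Cmod_ge_0 _) h). simpl in H1.
    pose proof (Cmod_ge_0 l). lra.
Qed.

Lemma terms_bounded (u : nat -> C) (l : C) : is_series u l ->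
  exists B, forall n, Cmod (u n) <= B.
Proof.
  intro Hu. destruct (partial_bounded u l Hu) as [M HM].
  exists (2 * M). intro n. pose proof (HM 0%nat). pose proof (Cmod_ge_0 (sum_n u 0)).
  destruct n.
  - rewrite sum_O in H, H0. lra.
  - pose proof (HM (S n)). pose proof (HM n). rewrite sum_Sn in H1.
    change (plus (sum_n u n) (u (S n))) with (Cplus (sum_n u n) (u (S n))) in H1.
    pose proof (Cmod_triangle (Cplus (sum_n u n) (u (S n))) (Copp (sum_n u n))).
    rewrite Cadd_sub in H3.
    rewrite Cmod_opp in H3. lra.
Qed.

Lemma abel (a : nat -> C) :
  (forall w : C, Cmod w < 1 -> exists l, is_pseries a w l) ->
  forall r, 0 <= r < 1 -> ex_series (fun n => (INR n + 1)^2 * (Cmod (a n) * r^n)).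
Proof.
  intros Ha r Hr.
  set (rho := (1 + r) / 2).
  assert (Hrho : 0 < rho < 1) by (unfold rho; lra).
  destruct (Ha (RtoC rho)) as [l Hl]. { rewrite Cmod_R, Rabs_pos_eq; lra. }
  destruct (terms_bounded _ _ Hl) as [B HB].
  set (q := r / rho). assert (Hq : 0 <= q < 1).
  { assert (E : q * rho = r) by (unfold q; field; lra).
    assert (0 <= q). { unfold q. apply Rmult_le_pos. lra. apply Rlt_le, Rinv_0_lt_compat; lra. }
    split. lra. unfold rho in *. nra. }
  set (q' := (1 + q) / 2). assert (Hq' : 0 < q' < 1) by (unfold q'; lra).
  assert (HB0 : 0 <= B). { eapply Rle_trans; [apply Cmod_ge_0| exact (HB 0%nat)]. }
  apply (ex_series_le (K:=R_AbsRing) (V:=R_CompleteNormedModule) _ (fun n => B * ((INR n + 1)^2 * q'^n))).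
  - intro n. specialize (HB n).
    change (scal (pow_n (K:=C_AbsRing) (RtoC rho) n) (a n)) with (Cmult (pow_n (K:=C_AbsRing) (RtoC rho) n) (a n)) in HB.
    rewrite pow_n_Cpow, Cmod_mult, Cmod_pow, Cmod_R, Rabs_pos_eq in HB by lra.
    change norm with Rabs. simpl norm.
    assert (E : Cmod (a n) * r ^ n = (rho ^ n * Cmod (a n)) * q ^ n).
    { replace r with (rho * q) at 1 by (unfold q; field; lra). rewrite Rpow_mult_distr. ring. }
    rewrite E.
    assert (Hqn : q ^ n <= q' ^ n) by (apply pow_incr; unfold q'; lra).
    assert (Hp : 0 <= (INR n + 1)^2) by apply pow2_ge_0.
    assert (Hqn0 : 0 <= q ^ n) by (apply pow_le; lra).
    assert (Ha0 : 0 <= rho ^ n * Cmod (a n)) by (apply Rmult_le_pos; [apply pow_le; lra| apply Cmod_ge_0]).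
    rewrite Rabs_pos_eq by (apply Rmult_le_pos; [exact Hp| apply Rmult_le_pos; assumption]).
    replace (B * ((INR n + 1) ^ 2 * q' ^ n)) with ((INR n + 1) ^ 2 * (B * q' ^ n)) by ring.
    apply Rmult_le_compat_l. exact Hp. apply Rmult_le_compat; assumption.
  - exact (ex_series_scal (K:=R_AbsRing) (V:=R_NormedModule) B _ (ex_series_poly_geom q' Hq')).
Qed.


Definition E (a : nat -> C) (r : R) (n : nat) : R := (INR n + 1)^2 * (Cmod (a n) * r^n).

Lemma E_nonneg a r n : 0 <= r -> 0 <= E a r n.
Proof. intro. unfold E. apply Rmult_le_pos. apply pow2_ge_0. apply Rmult_le_pos. apply Cmod_ge_0. apply pow_le; lra. Qed.

Lemma shiftE (a : nat -> C) :
  (forall s, 0 <= s < 1 -> ex_series (E a s)) ->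
  forall r, 0 <= r < 1 -> ex_series (E (fun n => a (S n)) r).
Proof.
  intros H r Hr. set (s := (1 + r) / 2). assert (Hs : 0 < s < 1) by (unfold s; lra).
  pose proof (H s (conj (Rlt_le _ _ (proj1 Hs)) (proj2 Hs))) as Hex.
  apply (ex_series_incr_1 (K:=R_AbsRing)) in Hex.
  pose proof (ex_series_scal (K:=R_AbsRing) (V:=R_NormedModule) (/ s) _ Hex) as Hex2.
  apply (ex_series_le (K:=R_AbsRing) (V:=R_CompleteNormedModule) _ _ ) with (2 := Hex2).
  intro n. change norm with Rabs. simpl norm.
  rewrite Rabs_pos_eq by (apply E_nonneg; lra).
  change (scal (/ s) (E a s (S n))) with (/ s * E a s (S n)).
  unfold E. rewrite S_INR. simpl pow.
  assert (h1 : r ^ n <= s ^ n) by (apply pow_incr; unfold s; lra).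
  assert (h2 : (INR n + 1) ^ 2 <= (INR n + 1 + 1) ^ 2) by (pose proof (pos_INR n); nra).
  pose proof (Cmod_ge_0 (a (S n))). pose proof (pow_le r n (proj1 Hr)).
  assert (E1 : / s * ((INR n + 1 + 1) * ((INR n + 1 + 1) * 1) * (Cmod (a (S n)) * (s * s ^ n)))
              = (INR n + 1 + 1) ^ 2 * (Cmod (a (S n)) * s ^ n)) by (field; lra).
  rewrite E1. simpl pow.
  apply Rmult_le_compat. apply pow2_ge_0. apply Rmult_le_pos; lra. simpl in h2; lra.
  apply Rmult_le_compat_l; lra.
Qed.

Definition HT (f : C -> C) (a : nat -> C) := forall w : C, Cmod w < 1 -> is_pseries a w (f w).

Lemma HT_E f a : HT f a -> forall r, 0 <= r < 1 -> ex_series (E a r).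
Proof. intros H. apply abel. intros w Hw. exists (f w). apply H, Hw. Qed.

Definition dcoef (a : nat -> C) (n : nat) : C := (RtoC (INR n + 1) * a (S n))%C.

Lemma deriv_series_ex f a z : HT f a -> Cmod z < 1 -> exists D, is_pseries (dcoef a) z D.
Proof.
  intros H Hz.
  pose proof (shiftE a (HT_E f a H) (Cmod z) (conj (Cmod_ge_0 z) Hz)) as Hex.
  assert (ex_series (fun n => scal (pow_n (K:=C_AbsRing) z n) (dcoef a n))).
  { apply (ex_series_le (K:=C_AbsRing) (V:=C_CompleteNormedModule)) with (2 := Hex).
    intro n. change norm with Cmod. simpl norm.
    change (scal (pow_n (K:=C_AbsRing) z n) (dcoef a n)) with (Cmult (pow_n (K:=C_AbsRing) z n) (dcoef a n)).
    rewrite pow_n_Cpow. unfold dcoef, E. rewrite !Cmod_mult, Cmod_pow, Cmod_R, Rabs_pos_eq.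
    2: pose proof (pos_INR n); lra.
    pose proof (pos_INR n). pose proof (Cmod_ge_0 (a (S n))). pose proof (pow_le _ n (Cmod_ge_0 z)).
    assert (INR n + 1 <= (INR n + 1)^2) by nra.
    replace (Cmod z ^ n * ((INR n + 1) * Cmod (a (S n)))) with ((INR n + 1) * (Cmod (a (S n)) * Cmod z ^ n)) by ring.
    apply Rmult_le_compat_r. apply Rmult_le_pos; lra. lra. }
  destruct H0 as [D HD]. exists D. exact HD.
Qed.


Definition Fd (z h : C) (n : nat) : C :=
  (Cpow (z + h) (S n) - Cpow z (S n) - RtoC (INR n + 1) * h * Cpow z n)%C.

Lemma Fd_0 z h : Fd z h 0 = 0%C.
Proof. unfold Fd. simpl Cpow. change (INR 0) with 0. rewrite Rplus_0_l. ring. Qed.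

Lemma Fd_S z h n : Fd z h (S n) = ((z + h) * Fd z h n + RtoC (INR n + 1) * h * h * Cpow z n)%C.
Proof. unfold Fd. rewrite S_INR. rewrite !RtoC_plus. change (Cpow (z+h) (S (S n))) with ((z+h) * Cpow (z+h) (S n))%C.
  change (Cpow z (S (S n))) with (z * Cpow z (S n))%C. change (Cpow z (S n)) with (z * Cpow z n)%C. ring. Qed.

Lemma Fd_bound z h n : Cmod (Fd z h (S n)) <= (INR n + 1)^2 * Cmod h ^ 2 * (Cmod z + Cmod h) ^ n.
Proof.
  set (R0 := Cmod z + Cmod h).
  assert (HR : 0 <= R0) by (unfold R0; pose proof (Cmod_ge_0 z); pose proof (Cmod_ge_0 h); lra).
  assert (Hzh : Cmod (z + h) <= R0) by apply Cmod_triangle.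
  induction n.
  - rewrite Fd_S, Fd_0. change (INR 0) with 0. rewrite Rplus_0_l.
    replace ((z + h) * 0 + RtoC 1 * h * h * Cpow z 0)%C with (h * h)%C by (simpl; ring).
    rewrite Cmod_mult. simpl. lra.
  - rewrite Fd_S. eapply Rle_trans. apply Cmod_triangle.
    rewrite !Cmod_mult, Cmod_pow, Cmod_R, Rabs_pos_eq by (pose proof (pos_INR (S n)); lra).
    pose proof (pos_INR n). rewrite S_INR.
    assert (Hz : Cmod z ^ S n <= R0 ^ S n) by (apply pow_incr; split; [apply Cmod_ge_0| unfold R0; pose proof (Cmod_ge_0 h); lra]).
    pose proof (Cmod_ge_0 h). pose proof (Cmod_ge_0 (Fd z h (S n))).
    pose proof (pow_le _ n HR).
    assert (A1 : Cmod (z + h) * Cmod (Fd z h (S n)) <= R0 * ((INR n + 1) ^ 2 * Cmod h ^ 2 * R0 ^ n)).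
    { apply Rmult_le_compat; try lra. apply Cmod_ge_0. }
    assert (A2 : (INR n + 1 + 1) * Cmod h * Cmod h * Cmod z ^ S n <= (INR n + 1 + 1) * Cmod h * Cmod h * R0 ^ S n).
    { apply Rmult_le_compat_l. apply Rmult_le_pos. apply Rmult_le_pos; lra. lra. exact Hz. }
    simpl pow in *. nra.
Qed.


Lemma shift0 (u : nat -> C) (l : C) : is_series u l -> u 0%nat = 0%C -> is_series (fun n => u (S n)) l.
Proof.
  intros H H0. apply is_series_incr_1.
  rewrite H0. replace (@plus (NormedModule.AbelianMonoid C_AbsRing C_NormedModule) l (RtoC (IZR Z0))) with l. exact H.
  change (l = Cplus l 0%C). ring.
Qed.

Lemma pseries_C (a : nat -> C) (w l : C) : is_pseries a w l <-> is_series (fun n => Cpow w n * a n)%C l.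
Proof.
  unfold is_pseries. split; intro H; eapply is_series_ext; try exact H; intro n;
  change (scal (pow_n w n) (a n)) with (Cmult (pow_n (K:=C_AbsRing) w n) (a n)); rewrite pow_n_Cpow; reflexivity.
Qed.

Lemma deriv_est f a z D : HT f a -> Cmod z < 1 -> is_pseries (dcoef a) z D ->
  exists delta, 0 < delta /\ exists K, forall h, Cmod h < delta ->
    Cmod (f (z + h) - f z - h * D)%C <= K * Cmod h ^ 2.
Proof.
  intros H Hz HD.
  set (rho := (1 + Cmod z) / 2).
  pose proof (Cmod_ge_0 z) as Hz0.
  assert (Hrho : 0 < rho < 1) by (unfold rho; lra).
  exists (rho - Cmod z). split. unfold rho; lra.
  pose proof (shiftE a (HT_E f a H) rho (conj (Rlt_le _ _ (proj1 Hrho)) (proj2 Hrho))) as Hex.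
  set (S0 := Series (E (fun n => a (S n)) rho)).
  exists (S0 / rho). intros h Hh.
  set (w := (z + h)%C).
  assert (Hw : Cmod w <= Cmod z + Cmod h) by apply Cmod_triangle.
  pose proof (Cmod_ge_0 h) as Hh0.
  pose proof (proj1 (pseries_C _ _ _) (H w ltac:(lra))) as H1.
  pose proof (proj1 (pseries_C _ _ _) (H z Hz)) as H2.
  pose proof (is_series_minus _ _ _ _ H1 H2) as H3.
  apply shift0 in H3. 2: { simpl. change (plus (1 * a 0%nat) (opp (1 * a 0%nat)))%C with ((1 * a 0%nat) + - (1 * a 0%nat))%C. ring. }
  pose proof (is_series_scal h _ _ (proj1 (pseries_C _ _ _) HD)) as H4.
  pose proof (is_series_minus _ _ _ _ H3 H4) as H5.
  pose proof (is_series_scal (K:=R_AbsRing) (V:=R_NormedModule) (Cmod h ^ 2 / rho) _ _ (Series_correct _ Hex)) as H6.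
  pose proof (series_norm_le _ _ _ _ H5 H6) as H7.
  change (Cmod (f w - f z - h * D)%C <= S0 / rho * Cmod h ^ 2).
  replace (S0 / rho * Cmod h ^ 2) with (Cmod h ^ 2 / rho * S0) by (field; lra).
  apply H7. clear H1 H2 H3 H4 H5 H6 H7.
  intro n.
  change (Cmod ((Cpow w (S n) * a (S n) + - (Cpow z (S n) * a (S n))) + - (h * (Cpow z n * dcoef a n)))%C
    <= Cmod h ^ 2 / rho * E (fun n => a (S n)) rho n).
  replace ((Cpow w (S n) * a (S n) + - (Cpow z (S n) * a (S n))) + - (h * (Cpow z n * dcoef a n)))%C
    with (a (S n) * Fd z h n)%C by (unfold Fd, dcoef, w; ring).
  rewrite Cmod_mult.
  assert (HE : 0 <= E (fun n => a (S n)) rho n) by (apply E_nonneg; lra).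
  destruct n.
  - rewrite Fd_0, Cmod_0, Rmult_0_r. apply Rmult_le_pos. apply Rmult_le_pos. apply pow2_ge_0.
    apply Rlt_le, Rinv_0_lt_compat; lra. exact HE.
  - pose proof (Fd_bound z h n) as HF.
    unfold E. rewrite S_INR.
    assert (HR : (Cmod z + Cmod h) ^ n <= rho ^ n) by (apply pow_incr; lra).
    pose proof (pos_INR n).
    pose proof (Cmod_ge_0 (a (S (S n)))).
    pose proof (pow_le _ n (Rlt_le _ _ (proj1 Hrho))).
    assert (HFF : Cmod (Fd z h (S n)) <= (INR n + 1 + 1) ^ 2 * Cmod h ^ 2 * rho ^ n).
    { eapply Rle_trans. exact HF. apply Rmult_le_compat. apply Rmult_le_pos; apply pow2_ge_0.
      apply pow_le. lra. apply Rmult_le_compat_r. apply pow2_ge_0. nra. exact HR. }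
    replace (Cmod h ^ 2 / rho * ((INR n + 1 + 1) ^ 2 * (Cmod (a (S (S n))) * rho ^ S n)))
      with (Cmod (a (S (S n))) * ((INR n + 1 + 1) ^ 2 * Cmod h ^ 2 * rho ^ n)) by (simpl; field; lra).
    apply Rmult_le_compat_l; assumption.
Qed.


Lemma deriv_of_est (f : C -> C) (z D : C) (delta K : R) : 0 < delta ->
  (forall h, Cmod h < delta -> Cmod (f (z + h) - f z - h * D)%C <= K * Cmod h ^ 2) ->
  is_derive (K := C_AbsRing) (V := C_NormedModule) f z D.
Proof.
  intros Hd Hest. split.
  - apply is_linear_scal_l.
  - intros x Hx. apply (is_filter_lim_locally_unique (K:=C_AbsRing) (V:=AbsRing_NormedModule C_AbsRing)) in Hx. subst x.
    intro eps.
    set (K' := Rabs K + 1).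
    assert (HK' : 0 < K') by (unfold K'; pose proof (Rabs_pos K); lra).
    assert (He : 0 < Rmin delta (eps / K')).
    { apply Rmin_pos. exact Hd. apply Rdiv_lt_0_compat. apply cond_pos. exact HK'. }
    assert (P : forall y : C, Cmod (Cminus y z) < Rmin delta (eps / K') ->
      Cmod ((f y - f z) - (y - z) * D)%C <= eps * Cmod (y - z)%C).
    2: { exists (mkposreal _ He). intros y Hy. apply P. exact Hy. }
    intros y Hy.
    set (h := (y - z)%C) in *.
    assert (Ey : y = (z + h)%C) by (unfold h; ring).
    rewrite Ey.
    assert (H1 : Cmod h < delta) by (pose proof (Rmin_l delta (eps / K')); unfold Cminus in Hy; lra).
    assert (H2 : Cmod h <= eps / K') by (pose proof (Rmin_r delta (eps / K')); unfold Cminus in Hy; lra).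
    eapply Rle_trans. apply Hest. exact H1.
    pose proof (Cmod_ge_0 h).
    assert (H3 : K' * Cmod h <= eps).
    { apply (Rmult_le_compat_l K') in H2; [|lra]. replace (K' * (eps / K')) with (pos eps) in H2 by (field; lra). exact H2. }
    assert (H4 : K <= K') by (unfold K'; pose proof (Rle_abs K); lra).
    simpl. nra.
Qed.


Lemma DER f a z : HT f a -> Cmod z < 1 ->
  exists D, is_pseries (dcoef a) z D /\ is_derive (K := C_AbsRing) (V := C_NormedModule) f z D.
Proof.
  intros H Hz. destruct (deriv_series_ex f a z H Hz) as [D HD].
  exists D. split. exact HD.
  destruct (deriv_est f a z D H Hz HD) as [delta [Hdel [K HK]]].
  eapply deriv_of_est. exact Hdel. exact HK.
Qed.

Definition pcoef (beta : R) (a : nat -> C) (n : nat) : C :=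
  ((RtoC beta + (1 - RtoC beta) * RtoC (INR n + 1)) * a (S n))%C.

Lemma PZ beta f a z D : HT f a -> a 0%nat = 0%C -> Cmod z < 1 -> z <> 0%C ->
  is_pseries (dcoef a) z D ->
  is_pseries (pcoef beta a) z (RtoC beta * (f z / z) + RtoC (1 - beta) * D)%C.
Proof.
  intros H Ha0 Hz Hz0 HD.
  pose proof (proj1 (pseries_C _ _ _) (H z Hz)) as H1.
  apply shift0 in H1. 2: { rewrite Ha0. simpl. ring. }
  pose proof (is_series_scal (RtoC beta / z)%C _ _ H1) as H2.
  pose proof (is_series_scal (RtoC (1 - beta)) _ _ (proj1 (pseries_C _ _ _) HD)) as H3.
  pose proof (is_series_plus _ _ _ _ H2 H3) as H4.
  apply pseries_C.
  replace (RtoC beta * (f z / z) + RtoC (1 - beta) * D)%C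
    with (plus (scal (RtoC beta / z)%C (f z)) (scal (RtoC (1 - beta)) D)).
  2: { change (Cplus (Cmult (RtoC beta / z)%C (f z)) (Cmult (RtoC (1 - beta)) D) = (RtoC beta * (f z / z) + RtoC (1 - beta) * D)%C).
       field. exact Hz0. }
  eapply is_series_ext. 2: exact H4.
  intro n. change (Cplus (Cmult (RtoC beta / z)%C (Cpow z (S n) * a (S n))%C) (Cmult (RtoC (1 - beta)) (Cpow z n * dcoef a n)%C) = (Cpow z n * pcoef beta a n)%C).
  unfold pcoef, dcoef. rewrite RtoC_minus. change (Cpow z (S n)) with (z * Cpow z n)%C. field. exact Hz0.
Qed.


Fixpoint csum (f : nat -> C) (n : nat) : C :=
  match n with O => 0%C | S m => (csum f m + f m)%C end.

Lemma csum_ext f g n : (forall k, (k < n)%nat -> f k = g k) -> csum f n = csum g n.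
Proof. induction n; intro H; simpl. reflexivity. rewrite IHn, H. reflexivity. lia. intros; apply H; lia. Qed.

Lemma csum_scal (c : C) f n : csum (fun k => c * f k)%C n = (c * csum f n)%C.
Proof. induction n; simpl. ring. rewrite IHn. ring. Qed.

Definition cis (t : R) : C := (cos t, sin t).

Lemma cis_mult a b : (cis a * cis b)%C = cis (a + b).
Proof. unfold cis, Cmult. simpl. rewrite cos_plus, sin_plus. f_equal; ring. Qed.

Lemma cis_pow t n : Cpow (cis t) n = cis (INR n * t).
Proof.
  induction n.
  - simpl. unfold cis. rewrite Rmult_0_l, cos_0, sin_0. reflexivity.
  - simpl Cpow. rewrite IHn, cis_mult, S_INR. f_equal. ring.
Qed.

Lemma Cmod_cis t : Cmod (cis t) = 1.
Proof.
  unfold Cmod, cis. simpl fst; simpl snd. pose proof (sin2_cos2 t). unfold Rsqr in H.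
  replace (cos t ^ 2 + sin t ^ 2) with 1 by (simpl; lra). apply sqrt_1.
Qed.

Section Roots.
Variable N : nat.
Hypothesis HN : (1 <= N)%nat.

Definition om : C := cis (2 * PI / INR N).

Lemma INR_N_pos : 0 < INR N.
Proof. apply lt_0_INR. lia. Qed.

Lemma om_N : Cpow om N = 1%C.
Proof.
  unfold om. rewrite cis_pow. replace (INR N * (2 * PI / INR N)) with (2 * PI).
  unfold cis. rewrite cos_2PI, sin_2PI. reflexivity.
  pose proof INR_N_pos. field. lra.
Qed.

Lemma om_s_neq1 s : (0 < s < N)%nat -> Cpow om s <> 1%C.
Proof.
  intros Hs Heq. unfold om in Heq. rewrite cis_pow in Heq.
  set (th := INR s * (2 * PI / INR N)) in Heq.
  assert (Hth : 0 < th / 2 < PI).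
  { pose proof INR_N_pos. pose proof PI_RGT_0.
    assert (0 < INR s) by (apply lt_0_INR; lia).
    assert (INR s < INR N) by (apply lt_INR; lia).
    unfold th. split.
    - apply Rmult_lt_0_compat; [|lra]. apply Rmult_lt_0_compat; [lra|]. apply Rdiv_lt_0_compat; lra.
    - replace (INR s * (2 * PI / INR N) / 2) with (PI * (INR s / INR N)) by (field; lra).
      assert (INR s / INR N < 1). { apply (Rmult_lt_reg_r (INR N)); [lra|]. field_simplify; lra. }
      nra. }
  unfold cis in Heq. injection Heq as Hc Hs'.
  pose proof (cos_2a_sin (th / 2)). replace (2 * (th / 2)) with th in H by field.
  pose proof (sin_gt_0 _ (proj1 Hth) (proj2 Hth)). nra.
Qed.

Lemma geom_csum (x : C) n : ((1 - x) * csum (fun k => Cpow x k) n = 1 - Cpow x n)%C.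
Proof. induction n; simpl. ring. rewrite Cmult_plus_distr_l, IHn. ring. Qed.

Lemma csum_one n : csum (fun _ => 1%C) n = RtoC (INR n).
Proof. induction n. reflexivity. simpl csum. rewrite IHn, S_INR, RtoC_plus. reflexivity. Qed.

Lemma root_sum q s : (s < N)%nat ->
  csum (fun k => Cpow (Cpow om k) (N * q + s)) N = if (s =? 0)%nat then RtoC (INR N) else 0%C.
Proof.
  intro Hs.
  rewrite (csum_ext _ (fun k => Cpow (Cpow om s) k)).
  2: { intros k _. rewrite <- !Cpow_mult_r, Nat.mul_comm, Nat.mul_add_distr_r, Cpow_add_r.
       rewrite <- (Nat.mul_assoc N q k), Cpow_mult_r, om_N, Cpow_1_l, Cmult_1_l. rewrite Nat.mul_comm. reflexivity. }
  destruct (Nat.eqb_spec s 0) as [E|E].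
  - subst s. simpl Cpow. rewrite (csum_ext _ (fun _ => 1%C)) by (intros; apply Cpow_1_l). apply csum_one.
  - set (x := Cpow om s).
    assert (Hx : x <> 1%C) by (apply om_s_neq1; lia).
    assert (HxN : Cpow x N = 1%C).
    { unfold x. rewrite <- Cpow_mult_r, Nat.mul_comm, Cpow_mult_r, om_N. apply Cpow_1_l. }
    pose proof (geom_csum x N) as G. rewrite HxN in G.
    assert (H1 : (1 - x)%C <> 0%C). { intro H0. apply Hx. apply Ceq_minus in H0. symmetry. exact H0. }
    replace (csum (fun k => Cpow x k) N) with (/ (1 - x) * ((1 - x) * csum (fun k => Cpow x k) N))%C by (field; exact H1).
    rewrite G. ring.
Qed.

End Roots.


Definition S9 (F : nat -> nat -> C) : C :=
  (F 0 0 + F 0 1 + F 0 2 + F 1 0 + F 1 1 + F 1 2 + F 2 0 + F 2 1 + F 2 2)%C%nat.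

Lemma csum_S9 (al : nat -> nat -> C) (g : nat -> nat -> nat -> C) n :
  csum (fun k => S9 (fun j l => al j l * g j l k))%C n = S9 (fun j l => al j l * csum (g j l) n)%C.
Proof. induction n; unfold S9 in *; simpl csum. ring. rewrite IHn. ring. Qed.

Section Key.
Variable N : nat.
Hypothesis HN : (5 <= N)%nat.
Variables x0 x1 x2 : C.

Definition eta k := Cpow (om N) k.
Definition xv j := match j with 0%nat => x0 | 1%nat => x1 | _ => x2 end.
Definition Gk k := (x0 + x1 * Cconj (eta k) + x2 * (Cconj (eta k) * Cconj (eta k)))%C.
Definition Yk k := Cmod (Gk k) ^ 2.

Lemma Cmod_eta k : Cmod (eta k) = 1.
Proof. unfold eta, om. rewrite Cmod_pow, Cmod_cis. apply pow1. Qed.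

Lemma eta_N k : Cpow (eta k) N = 1%C.
Proof. unfold eta. rewrite <- Cpow_mult_r, Nat.mul_comm, Cpow_mult_r, om_N by lia. apply Cpow_1_l. Qed.

Lemma eta_conj k : Cconj (eta k) = Cpow (eta k) (N - 1).
Proof.
  assert (H1 : (eta k * Cconj (eta k))%C = 1%C).
  { rewrite <- Cmod2_conj, Cmod_eta. simpl. f_equal; ring. }
  assert (H2 : (eta k * Cpow (eta k) (N - 1))%C = 1%C).
  { rewrite <- (eta_N k). replace N with (S (N - 1)) at 2 by lia. reflexivity. }
  transitivity (Cconj (eta k) * (eta k * Cpow (eta k) (N - 1)))%C. rewrite H2; ring.
  transitivity ((eta k * Cconj (eta k)) * Cpow (eta k) (N - 1))%C. ring. rewrite H1; ring.
Qed.

Lemma eta_exp k j l m : Cpow (eta k) ((N - 1) * j + l + m) =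
  (Cpow (Cconj (eta k)) j * Cpow (eta k) l * Cpow (eta k) m)%C.
Proof. rewrite !Cpow_add_r, Cpow_mult_r, eta_conj. reflexivity. Qed.

Lemma Y_expand k m : (RtoC (Yk k) * Cpow (eta k) m)%C =
  S9 (fun j l => (xv j * Cconj (xv l)) * Cpow (eta k) ((N - 1) * j + l + m))%C.
Proof.
  unfold Yk. rewrite Cmod2_conj. unfold S9. rewrite !eta_exp.
  unfold Gk. rewrite !Cplus_conj, !Cmult_conj, !Cconj_conj. simpl xv. simpl Cpow. ring.
Qed.

Lemma RS2 j l m : (j <= 2)%nat -> (l <= 2)%nat -> (m <= N - 3)%nat ->
  csum (fun k => Cpow (eta k) ((N - 1) * j + l + m)) N = if ((l + m) =? j)%nat then RtoC (INR N) else 0%C.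
Proof.
  intros Hj Hl Hm. unfold eta.
  destruct (Nat.eqb_spec (l + m) j) as [E|E].
  - replace ((N - 1) * j + l + m)%nat with (N * j + 0)%nat.
    2: { destruct j as [|[|[|j]]]; lia. }
    rewrite root_sum by lia. reflexivity.
  - destruct (Compare_dec.lt_dec j (l + m)) as [h|h].
    + replace ((N - 1) * j + l + m)%nat with (N * j + (l + m - j))%nat.
      2: { destruct j as [|[|[|j]]]; lia. }
      rewrite root_sum by lia. destruct (Nat.eqb_spec (l + m - j) 0). lia. reflexivity.
    + replace ((N - 1) * j + l + m)%nat with (N * (j - 1) + (N + l + m - j))%nat.
      2: { destruct j as [|[|[|j]]]; lia. }
      rewrite root_sum by lia. destruct (Nat.eqb_spec (N + l + m - j) 0). lia. reflexivity.
Qed.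

Definition W m := csum (fun k => RtoC (Yk k) * Cpow (eta k) m)%C N.

Lemma W_formula m : (m <= N - 3)%nat ->
  W m = S9 (fun j l => (xv j * Cconj (xv l)) * (if ((l + m) =? j)%nat then RtoC (INR N) else 0%C))%C.
Proof.
  intro Hm. unfold W. rewrite (csum_ext _ (fun k => S9 (fun j l => (xv j * Cconj (xv l)) *
      (fun j l k => Cpow (eta k) ((N - 1) * j + l + m)) j l k)%C)).
  2: { intros k _. apply Y_expand. }
  rewrite csum_S9. unfold S9. rewrite !RS2 by lia. reflexivity.
Qed.

End Key.


Lemma eqb_false a b : a <> b -> (a =? b)%nat = false.
Proof. apply Nat.eqb_neq. Qed.

Lemma W0_val N x0 x1 x2 : (5 <= N)%nat ->
  W N x0 x1 x2 0 = (RtoC (INR N) * (x0 * Cconj x0 + x1 * Cconj x1 + x2 * Cconj x2))%C.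
Proof. intro. rewrite W_formula by lia. unfold S9. simpl. ring. Qed.

Lemma W1_val N x0 x1 x2 : (5 <= N)%nat ->
  W N x0 x1 x2 1 = (RtoC (INR N) * (x1 * Cconj x0 + x2 * Cconj x1))%C.
Proof. intro. rewrite W_formula by lia. unfold S9. simpl. ring. Qed.

Lemma W2_val N x0 x1 x2 : (5 <= N)%nat ->
  W N x0 x1 x2 2 = (RtoC (INR N) * (x2 * Cconj x0))%C.
Proof. intro. rewrite W_formula by lia. unfold S9. simpl. ring. Qed.

Lemma Wm_val N x0 x1 x2 m : (5 <= N)%nat -> (3 <= m <= N - 3)%nat -> W N x0 x1 x2 m = 0%C.
Proof. intros. rewrite W_formula by lia. unfold S9. rewrite !eqb_false by lia. ring. Qed.

Lemma Re_csum_nonneg f n : (forall k, 0 <= Re (f k)) -> 0 <= Re (csum f n).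
Proof. intro H. induction n; simpl csum. simpl; lra. specialize (H n).
  change (Re (csum f n + f n)%C) with (Re (csum f n) + Re (f n)). lra. Qed.

Lemma Cmod_csum_le f n : Cmod (csum f n) <= rsum (fun k => Cmod (f k)) n.
Proof. induction n; simpl. rewrite Cmod_0; lra. eapply Rle_trans. apply Cmod_triangle. lra. Qed.

Lemma csum_RtoC (g : nat -> R) n : csum (fun k => RtoC (g k)) n = RtoC (rsum g n).
Proof. induction n; simpl. reflexivity. rewrite IHn, RtoC_plus. reflexivity. Qed.

Lemma series_csum (u : nat -> nat -> C) (l : nat -> C) n :
  (forall k, is_series (u k) (l k)) -> is_series (fun m => csum (fun k => u k m) n) (csum l n).
Proof.
  intro H. induction n.
  - simpl. exact (is_series_zero (K:=C_AbsRing) (V:=C_NormedModule)).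
  - simpl. exact (is_series_plus _ _ _ _ IHn (H n)).
Qed.

Lemma sum_n_zeros (t : nat -> C) K : (2 <= K)%nat -> (forall m, (3 <= m <= K)%nat -> t m = 0%C) ->
  sum_n t K = (t 0%nat + t 1%nat + t 2%nat)%C.
Proof.
  intros HK Hz. induction K. lia.
  destruct (Nat.eq_dec K 1) as [E|E].
  - subst K. rewrite sum_Sn, sum_Sn, sum_O. reflexivity.
  - rewrite sum_Sn, IHK by (try lia; intros; apply Hz; lia). rewrite (Hz (S K)) by lia.
    change (Cplus (t 0%nat + t 1%nat + t 2%nat)%C 0%C = (t 0%nat + t 1%nat + t 2%nat)%C). ring.
Qed.


Lemma rsum_ext f g n : (forall k, f k = g k) -> rsum f n = rsum g n.
Proof. intro H; induction n; simpl; [reflexivity| rewrite IHn, H; reflexivity]. Qed.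

Lemma plus_C (x y : C) : @plus (NormedModule.AbelianMonoid C_AbsRing C_NormedModule) x y = Cplus x y.
Proof. reflexivity. Qed.

Lemma KEYN (c : nat -> C) (P : C -> C) (r : R) N x0 x1 x2 :
  (5 <= N)%nat -> 0 < r < 1 -> c 0%nat = 1%C ->
  (forall z, 0 < Cmod z < 1 -> is_pseries c z (P z)) ->
  (forall z, 0 < Cmod z < 1 -> 0 <= Re (P z)) ->
  ex_series (fun m => Cmod (c m) * r^m) ->
  - (Cmod x0^2 + Cmod x1^2 + Cmod x2^2) * Series (fun k => Cmod (c (N - 2 + k)%nat) * r^(N - 2 + k))
   <= Re (RtoC (Cmod x0^2 + Cmod x1^2 + Cmod x2^2) + (x1 * Cconj x0 + x2 * Cconj x1) * c 1%nat * RtoC r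
          + x2 * Cconj x0 * c 2%nat * RtoC (r^2))%C.
Proof.
  intros HN Hr Hc0 HP HRe Hex.
  set (S := Cmod x0^2 + Cmod x1^2 + Cmod x2^2).
  set (Q := (RtoC S + (x1 * Cconj x0 + x2 * Cconj x1) * c 1%nat * RtoC r
          + x2 * Cconj x0 * c 2%nat * RtoC (r^2))%C).
  set (tau := Series (fun k => Cmod (c (N - 2 + k)%nat) * r^(N - 2 + k))).
  set (Y := Yk N x0 x1 x2).
  assert (HS : 0 <= S) by (unfold S; pose proof (pow2_ge_0 (Cmod x0)); pose proof (pow2_ge_0 (Cmod x1)); pose proof (pow2_ge_0 (Cmod x2)); lra).
  assert (HNpos : 0 < INR N) by (apply lt_0_INR; lia).
  assert (Hmod : forall k, Cmod (RtoC r * eta N k) = r).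
  { intro k. rewrite Cmod_mult, Cmod_R, Cmod_eta, Rabs_pos_eq; lra. }
  set (tot := csum (fun k => RtoC (Y k) * P (RtoC r * eta N k))%C N).
  set (t := fun m => csum (fun k => RtoC (Y k) * (Cpow (RtoC r * eta N k) m * c m))%C N).
  assert (Hser : is_series t tot).
  { apply series_csum. intro k.
    pose proof (proj1 (pseries_C _ _ _) (HP (RtoC r * eta N k)%C ltac:(rewrite Hmod; lra))) as H1.
    exact (is_series_scal (RtoC (Y k)) _ _ H1). }
  assert (Ht : forall m, t m = (c m * RtoC (r ^ m) * W N x0 x1 x2 m)%C).
  { intro m. unfold t, W. rewrite <- csum_scal. apply csum_ext. intros k _.
    rewrite Cpow_mult_l, RtoC_pow. fold Y. ring. }
  assert (Hsum : (t 0%nat + t 1%nat + t 2%nat)%C = (RtoC (INR N) * Q)%C).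
  { rewrite !Ht, W0_val, W1_val, W2_val by lia. rewrite Hc0. unfold Q, S.
    rewrite !RtoC_plus, !Cmod2_conj, !RtoC_pow. simpl Cpow. ring. }
  assert (Hshift : is_series (fun k => t (N - 2 + k)%nat) (tot - RtoC (INR N) * Q)%C).
  { apply is_series_incr_n. lia.
    replace (Init.Nat.pred (N - 2)) with (N - 3)%nat by lia.
    rewrite sum_n_zeros. 2: lia.
    2: { intros m Hm. rewrite Ht, Wm_val by lia. ring. }
    rewrite Hsum.
    rewrite plus_C. replace (Cplus (tot - RtoC (INR N) * Q)%C (RtoC (INR N) * Q)%C) with tot by ring. exact Hser. }
  assert (HY : rsum Y N = INR N * S).
  { assert (E1 : RtoC (rsum Y N) = W N x0 x1 x2 0).
    { rewrite <- csum_RtoC. unfold W. apply csum_ext. intros k _. simpl Cpow. fold Y. ring. }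
    rewrite W0_val in E1 by lia. unfold S in *. rewrite <- !Cmod2_conj, <- !RtoC_plus, <- RtoC_mult in E1.
    apply (f_equal Re) in E1. rewrite !re_RtoC in E1. exact E1. }
  assert (HW : forall m, Cmod (W N x0 x1 x2 m) <= INR N * S).
  { intro m. rewrite <- HY. unfold W. eapply Rle_trans. apply Cmod_csum_le.
    right. apply rsum_ext. intro k. rewrite Cmod_mult, Cmod_pow, Cmod_eta, pow1, Cmod_R, Rabs_pos_eq.
    unfold Y; ring. unfold Y, Yk. apply pow2_ge_0. }
  assert (Hex2 : ex_series (fun k => Cmod (c (N - 2 + k)%nat) * r^(N - 2 + k))).
  { apply (ex_series_incr_n (K:=R_AbsRing) (fun m => Cmod (c m) * r^m)). exact Hex. }
  pose proof (is_series_scal (K:=R_AbsRing) (V:=R_NormedModule) (INR N * S) _ _ (Series_correct _ Hex2)) as Hb.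
  pose proof (series_norm_le _ _ _ _ Hshift Hb) as HN1.
  assert (Hle : Cmod (tot - RtoC (INR N) * Q)%C <= INR N * S * tau).
  { apply HN1. intro k. change (scal (INR N * S) (Cmod (c (N - 2 + k)%nat) * r ^ (N - 2 + k))) with
      ((INR N * S) * (Cmod (c (N - 2 + k)%nat) * r ^ (N - 2 + k))).
    rewrite Ht, !Cmod_mult, Cmod_R, Rabs_pos_eq by (apply pow_le; lra).
    pose proof (HW (N - 2 + k)%nat). pose proof (Cmod_ge_0 (c (N - 2 + k)%nat)).
    pose proof (pow_le r (N - 2 + k) (Rlt_le _ _ (proj1 Hr))).
    rewrite Rmult_comm. apply Rmult_le_compat_r. apply Rmult_le_pos; assumption. exact H. }
  assert (Htot : 0 <= Re tot).
  { apply Re_csum_nonneg. intro k. rewrite re_scal_l. apply Rmult_le_pos. unfold Y, Yk. apply pow2_ge_0.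
    apply HRe. rewrite Hmod; lra. }
  pose proof (re_le_Cmod (tot - RtoC (INR N) * Q)%C) as Hre.
  assert (Ere : Re (tot - RtoC (INR N) * Q)%C = Re tot - INR N * Re Q).
  { destruct tot, Q. unfold Cminus, Cplus, Copp, Cmult, RtoC, Re; simpl; ring. }
  rewrite Ere in Hre. pose proof (Rle_abs (Re tot - INR N * Re Q)).
  assert (INR N * (- S * tau) <= INR N * Re Q) by nra.
  apply Rmult_le_reg_l in H0; assumption.
Qed.


Lemma tail_small (u : nat -> R) : ex_series u ->
  forall eps, 0 < eps -> exists M, forall n, (M <= n)%nat -> Series (fun k => u (n + k)%nat) < eps.
Proof.
  intros [l Hl] eps He.
  pose proof (is_series_unique _ _ Hl) as HS.
  apply is_series_Reals in Hl. destruct (Hl eps He) as [M0 HM0].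
  exists (S M0). intros n Hn.
  pose proof (Series_incr_n u n ltac:(lia) (ex_intro _ l (proj2 (is_series_Reals _ _) Hl))) as E.
  specialize (HM0 (Init.Nat.pred n) ltac:(lia)). unfold Rdist in HM0.
  rewrite HS in E. pose proof (Rle_abs (l - sum_f_R0 u (Init.Nat.pred n))).
  rewrite Rabs_minus_sym in HM0. lra.
Qed.

Lemma KEY (c : nat -> C) (P : C -> C) (r : R) x0 x1 x2 :
  0 < r < 1 -> c 0%nat = 1%C ->
  (forall z, 0 < Cmod z < 1 -> is_pseries c z (P z)) ->
  (forall z, 0 < Cmod z < 1 -> 0 <= Re (P z)) ->
  ex_series (fun m => Cmod (c m) * r^m) ->
  0 <= Re (RtoC (Cmod x0^2 + Cmod x1^2 + Cmod x2^2) + (x1 * Cconj x0 + x2 * Cconj x1) * c 1%nat * RtoC r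
          + x2 * Cconj x0 * c 2%nat * RtoC (r^2))%C.
Proof.
  intros Hr Hc0 HP HRe Hex.
  set (S := Cmod x0^2 + Cmod x1^2 + Cmod x2^2).
  set (q := Re (RtoC S + (x1 * Cconj x0 + x2 * Cconj x1) * c 1%nat * RtoC r
          + x2 * Cconj x0 * c 2%nat * RtoC (r^2))%C).
  assert (HS : 0 <= S) by (unfold S; pose proof (pow2_ge_0 (Cmod x0)); pose proof (pow2_ge_0 (Cmod x1)); pose proof (pow2_ge_0 (Cmod x2)); lra).
  destruct (Rle_or_lt 0 q) as [h|h]. exact h. exfalso.
  assert (He : 0 < - q / (S + 1)) by (apply Rdiv_lt_0_compat; lra).
  destruct (tail_small _ Hex _ He) as [M HM].
  pose proof (KEYN c P r (M + 5) x0 x1 x2 ltac:(lia) Hr Hc0 HP HRe Hex) as HK.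
  fold S in HK. fold q in HK.
  specialize (HM (M + 5 - 2)%nat ltac:(lia)).
  assert (S * Series (fun k => Cmod (c (M + 5 - 2 + k)%nat) * r ^ (M + 5 - 2 + k)) <= S * (- q / (S + 1))).
  { apply Rmult_le_compat_l. exact HS. left. exact HM. }
  assert (S * (- q / (S + 1)) < - q).
  { replace (S * (- q / (S + 1))) with ((- q) * (S / (S + 1))) by (field; lra).
    assert (S / (S + 1) < 1). { apply (Rmult_lt_reg_r (S + 1)). lra. field_simplify; lra. }
    nra. }
  lra.
Qed.

Lemma Cconj_R (a : R) : Cconj (RtoC a) = RtoC a.
Proof. unfold Cconj, RtoC. simpl. f_equal. ring. Qed.

Lemma CARA (c : nat -> C) (P : C -> C) (mu : R) :
  0 <= mu <= 1 -> c 0%nat = 1%C ->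
  (forall z, 0 < Cmod z < 1 -> is_pseries c z (P z)) ->
  (forall z, 0 < Cmod z < 1 -> 0 <= Re (P z)) ->
  (forall r, 0 < r < 1 -> ex_series (fun m => Cmod (c m) * r^m)) ->
  Cmod (c 2%nat - RtoC mu * (c 1%nat * c 1%nat))%C <= 2.
Proof.
  intros Hmu Hc0 HP HRe Hex.
  set (w := (c 2%nat - RtoC mu * (c 1%nat * c 1%nat))%C).
  set (m := Cmod w).
  destruct (Req_dec m 0) as [Hm0|Hm0]. { fold m. lra. }
  assert (Hw0 : w <> 0%C). { intro E. apply Hm0. unfold m. rewrite E. apply Cmod_0. }
  assert (Hmpos : 0 < m) by (pose proof (Cmod_ge_0 w); unfold m in *; lra).
  set (lam := (RtoC (/ m) * Cconj w)%C).
  assert (Hlam : Cmod lam = 1).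
  { unfold lam. rewrite Cmod_mult, Cmod_R, Cmod_conj, Rabs_pos_eq. fold m. field. lra.
    apply Rlt_le, Rinv_0_lt_compat; lra. }
  assert (Hlw : (lam * w)%C = RtoC m).
  { unfold lam. replace (RtoC (/ m) * Cconj w * w)%C with (RtoC (/ m) * (w * Cconj w))%C by ring.
    rewrite <- Cmod2_conj. fold m. rewrite <- RtoC_mult. f_equal. field. lra. }
  assert (Hr : forall r, 0 < r < 1 -> r^2 * m <= 2).
  { intros r Hr.
    pose proof (KEY c P r 1%C (RtoC (- (mu * r)) * Cconj (c 1%nat))%C (- lam)%C Hr Hc0 HP HRe (Hex r Hr)) as HK.
    rewrite Cmod_1, Cmod_opp, Hlam, Cmod_mult, Cmod_R, Cmod_conj in HK.
    rewrite !Cmult_conj, !Cconj_R, Cconj_conj in HK.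
    assert (EQ : (RtoC (1 ^ 2 + (Rabs (- (mu * r)) * Cmod (c 1%nat)) ^ 2 + 1 ^ 2) +
          (RtoC (- (mu * r)) * Cconj (c 1%nat) * 1 + - lam * (RtoC (- (mu * r)) * c 1%nat)) * c 1%nat * RtoC r +
          - lam * 1 * c 2%nat * RtoC (r ^ 2))%C =
          (RtoC (2 + mu^2 * r^2 * Cmod (c 1%nat)^2) - RtoC (mu * r^2) * (c 1%nat * Cconj (c 1%nat)) - RtoC (r^2) * (lam * w))%C).
    { unfold w.
      replace ((Rabs (- (mu * r)) * Cmod (c 1%nat)) ^ 2) with (mu^2 * r^2 * Cmod (c 1%nat)^2)
        by (rewrite Rabs_Ropp, Rabs_pos_eq by nra; ring).
      rewrite !RtoC_plus, !RtoC_mult, !RtoC_pow, RtoC_opp, !RtoC_mult. simpl Cpow. ring. }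
    rewrite EQ, Hlw, <- Cmod2_conj in HK.
    rewrite <- RtoC_mult, <- RtoC_mult, <- RtoC_minus, <- RtoC_minus, re_RtoC in HK.
    assert (mu^2 * r^2 * Cmod (c 1%nat)^2 - mu * r^2 * Cmod (c 1%nat)^2 <= 0).
    { replace (mu^2 * r^2 * Cmod (c 1%nat)^2 - mu * r^2 * Cmod (c 1%nat)^2) with
        ((mu - 1) * mu * (r^2 * Cmod (c 1%nat)^2)) by ring.
      assert (0 <= r^2 * Cmod (c 1%nat)^2) by (apply Rmult_le_pos; apply pow2_ge_0).
      assert ((mu - 1) * mu <= 0) by nra. nra. }
    lra. }
  destruct (Rle_or_lt m 2) as [h|h]. exact h. exfalso.
  set (t := (1 + 2 / m) / 2).
  assert (Ht : 2 / m < t < 1).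
  { assert (2 / m < 1). { apply (Rmult_lt_reg_r m). lra. field_simplify; lra. }
    unfold t; lra. }
  assert (Ht0 : 0 < 2 / m) by (apply Rdiv_lt_0_compat; lra).
  specialize (Hr (sqrt t)). 
  assert (0 < sqrt t < 1).
  { split. apply sqrt_lt_R0. lra. rewrite <- sqrt_1. apply sqrt_lt_1_alt. lra. }
  specialize (Hr H). replace (sqrt t ^ 2) with t in Hr by (simpl; rewrite Rmult_1_r, sqrt_sqrt; lra).
  assert (t * m > 2).
  { assert (2 / m * m = 2) by (field; lra). nra. }
  lra.
Qed.


Lemma plus_opp_C (x : C) : @plus (NormedModule.AbelianMonoid C_AbsRing C_NormedModule) x
  (@opp (NormedModule.AbelianGroup C_AbsRing C_NormedModule) x) = RtoC 0.
Proof. change (Cplus x (Copp x) = 0%C). ring. Qed.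
Lemma zero_R : @zero (NormedModule.AbelianMonoid R_AbsRing R_NormedModule) = 0.
Proof. reflexivity. Qed.

Lemma series_unique_C (u : nat -> C) l1 l2 : is_series u l1 -> is_series u l2 -> l1 = l2.
Proof.
  intros H1 H2. pose proof (is_series_minus _ _ _ _ H1 H2) as H3.
  pose proof (series_norm_le _ _ _ _ H3 (is_series_zero (K:=R_AbsRing) (V:=R_NormedModule))) as H4.
  assert (Cmod (plus l1 (opp l2)) <= 0).
  { apply H4. intro n. simpl. rewrite plus_opp_C, zero_R, Cmod_0. lra. }
  pose proof (Cmod_ge_0 (plus l1 (opp l2))).
  assert (E : Cmod (plus l1 (opp l2)) = 0) by lra. apply Cmod_eq_0 in E.
  change ((l1 + - l2)%C = 0%C) in E. apply Ceq_minus in E. exact E.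
Qed.

Lemma series_single (v : nat -> C) L : is_series v L -> (forall n, v (S n) = 0%C) -> L = v 0%nat.
Proof.
  intros H Hv. apply (series_unique_C v). exact H.
  apply is_series_decr_1. rewrite plus_opp_C.
  eapply is_series_ext. 2: exact (is_series_zero (K:=C_AbsRing) (V:=C_NormedModule)).
  intro n. rewrite Hv. reflexivity.
Qed.

Lemma pcoef_R beta a n : pcoef beta a n = (RtoC (beta + (1 - beta) * (INR n + 1)) * a (S n))%C.
Proof. unfold pcoef. f_equal. rewrite !RtoC_plus, !RtoC_mult, !RtoC_minus, !RtoC_plus. ring. Qed.

Lemma dcoef0 a : (Cpow 0 0 * dcoef a 0)%C = a 1%nat.
Proof. unfold dcoef. change (INR 0) with 0. rewrite Rplus_0_l. simpl Cpow. ring. Qed.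
Lemma cpow0S (u : nat -> C) n : (Cpow 0 (S n) * u (S n))%C = 0%C.
Proof. simpl. ring. Qed.

Lemma f_at_0 f a : HT f a -> f 0%C = a 0%nat.
Proof.
  intro H. pose proof (proj1 (pseries_C _ _ _) (H 0%C ltac:(rewrite Cmod_0; lra))) as H0.
  rewrite (series_single _ _ H0). simpl. ring.
  intro n. simpl. ring.
Qed.

Lemma deriv_at_0 f a : HT f a -> is_derive (K := C_AbsRing) (V := C_NormedModule) f (RtoC 0) (a 1%nat).
Proof.
  intro H. destruct (DER f a 0%C H ltac:(rewrite Cmod_0; lra)) as [D [HD1 HD2]].
  apply pseries_C in HD1.
  assert (E0 : D = a 1%nat).
  { rewrite (series_single _ _ HD1). apply dcoef0. intro n. apply cpow0S. }
  rewrite <- E0. exact HD2.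
Qed.

Lemma part1 beta f a : 0 <= beta <= 1 -> A_beta beta f -> taylor_on_disk f a ->
  Cmod (a 3%nat - a 2%nat * a 2%nat)%C <= 2 / (3 - 2 * beta).
Proof.
  intros Hb [[a' [Ht' [Ha'0 Ha'1]]] Hpos] Ht.
  assert (HT1 : HT f a) by exact Ht. assert (HT2 : HT f a') by exact Ht'.
  assert (Ha0 : a 0%nat = 0%C) by (rewrite <- (f_at_0 f a HT1), (f_at_0 f a' HT2); exact Ha'0).
  assert (Ha1 : a 1%nat = 1%C).
  { pose proof (is_C_derive_unique _ _ _ (deriv_at_0 f a HT1)).
    pose proof (is_C_derive_unique _ _ _ (deriv_at_0 f a' HT2)). congruence. }
  set (c := pcoef beta a).
  set (P := fun z => (RtoC beta * (f z / z) + RtoC (1 - beta) * C_derive f z)%C).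
  assert (HP : forall z, 0 < Cmod z < 1 -> is_pseries c z (P z)).
  { intros z Hz. assert (Hz0 : z <> 0%C) by (apply Cmod_gt_0; lra).
    destruct (DER f a z HT1 ltac:(lra)) as [D [HD1 HD2]].
    unfold P. rewrite (is_C_derive_unique _ _ _ HD2). apply PZ; auto. lra. }
  assert (HRe : forall z, 0 < Cmod z < 1 -> 0 <= Re (P z)).
  { intros z Hz. assert (Hz0 : z <> 0%C) by (apply Cmod_gt_0; lra).
    destruct (Hpos z ltac:(unfold in_unit_disk; lra) Hz0) as [d [Hd1 Hd2]].
    unfold P. rewrite (is_C_derive_unique _ _ _ Hd1). lra. }
  assert (Hc0 : c 0%nat = 1%C).
  { unfold c. rewrite pcoef_R, Ha1. change (INR 0) with 0.
    replace (beta + (1 - beta) * (0 + 1)) with 1 by ring. apply Cmult_1_r. }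
  assert (Hex : forall r, 0 < r < 1 -> ex_series (fun m => Cmod (c m) * r^m)).
  { intros r Hr. pose proof (shiftE a (HT_E f a HT1) r ltac:(lra)) as HE.
    apply (ex_series_le (K:=R_AbsRing) (V:=R_CompleteNormedModule)) with (2 := HE).
    intro n. change norm with Rabs. simpl norm. unfold c. rewrite pcoef_R, Cmod_mult, Cmod_R.
    pose proof (pos_INR n). pose proof (Cmod_ge_0 (a (S n))). pose proof (pow_le r n ltac:(lra)).
    rewrite (Rabs_pos_eq (beta + _)) by nra.
    rewrite Rabs_pos_eq by (apply Rmult_le_pos; [apply Rmult_le_pos|]; nra).
    unfold E.
    assert (beta + (1 - beta) * (INR n + 1) <= (INR n + 1)^2) by nra.
    assert (0 <= Cmod (a (S n)) * r ^ n) by nra. nra. }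
  set (mu := (3 - 2 * beta) / (2 - beta)^2).
  assert (Hmu : 0 <= mu <= 1).
  { assert (0 < (2 - beta)^2) by nra.
    assert (E : mu * (2 - beta)^2 = 3 - 2 * beta) by (unfold mu; field; lra). nra. }
  pose proof (CARA c P mu Hmu Hc0 HP HRe Hex) as HC.
  assert (Eq : (a 3%nat - a 2%nat * a 2%nat)%C = (RtoC (/ (3 - 2 * beta)) * (c 2%nat - RtoC mu * (c 1%nat * c 1%nat)))%C).
  { unfold c. rewrite !pcoef_R. destruct (a 2%nat) as [u1 v1], (a 3%nat) as [u2 v2]. simpl INR. unfold mu.
    unfold Cminus, Cmult, Cplus, Copp, RtoC. simpl. f_equal; field; repeat split; lra. }
  rewrite Eq, Cmod_mult, Cmod_R, Rabs_pos_eq by (apply Rlt_le, Rinv_0_lt_compat; lra).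
  replace (2 / (3 - 2 * beta)) with (/ (3 - 2 * beta) * 2) by (field; lra). apply Rmult_le_compat_l. apply Rlt_le, Rinv_0_lt_compat; lra. exact HC.
Qed.


Definition cc (n : nat) : R := match n with 0%nat => 1 | _ => if Nat.even n then 2 else 0 end.
Definition b2 (beta : R) (n : nat) : C :=
  match n with 0%nat => 0%C | S j => RtoC (cc j / (INR j + 1 - INR j * beta)) end.
Definition f2 (beta : R) (z : C) : C :=
  epsilon (inhabits (RtoC 0)) (fun l => is_pseries (b2 beta) z l).

Lemma cc_bound n : 0 <= cc n <= 2.
Proof. unfold cc. destruct n. lra. destruct (Nat.even _); lra. Qed.

Lemma b2_bound beta n : 0 <= beta <= 1 -> Cmod (b2 beta n) <= 2.
Proof.
  intro Hb. destruct n; simpl b2. rewrite Cmod_0; lra.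
  rewrite Cmod_R. pose proof (cc_bound n). pose proof (pos_INR n).
  assert (1 <= INR n + 1 - INR n * beta) by nra.
  rewrite Rabs_pos_eq by (apply Rdiv_le_0_compat; lra).
  apply (Rmult_le_reg_r (INR n + 1 - INR n * beta)). lra.
  field_simplify; nra.
Qed.

Lemma ex_geom_C (u : nat -> C) (z : C) (B : R) : Cmod z < 1 -> (forall n, Cmod (u n) <= B) ->
  exists l : C, is_series (fun n => Cpow z n * u n)%C l.
Proof.
  intros Hz Hu.
  assert (ex_series (fun n => Cpow z n * u n)%C).
  { apply (ex_series_le (K:=C_AbsRing) (V:=C_CompleteNormedModule)) with (b := fun n => B * Cmod z ^ n).
    - intro n. change norm with Cmod. simpl norm. rewrite Cmod_mult, Cmod_pow.
      rewrite Rmult_comm. apply Rmult_le_compat_r. apply pow_le, Cmod_ge_0. apply Hu.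
    - exists (B * / (1 - Cmod z)).
      apply (is_series_scal (K:=R_AbsRing) (V:=R_NormedModule) B).
      apply is_series_geom. rewrite Rabs_pos_eq. exact Hz. apply Cmod_ge_0. }
  destruct H as [l Hl]. exists l. exact Hl.
Qed.

Lemma HT_f2 beta : 0 <= beta <= 1 -> HT (f2 beta) (b2 beta).
Proof.
  intros Hb w Hw. unfold f2. apply epsilon_spec.
  destruct (ex_geom_C (b2 beta) w 2 Hw (fun n => b2_bound beta n Hb)) as [l Hl].
  exists l. apply pseries_C. exact Hl.
Qed.

Lemma GEO (z : C) : Cmod z < 1 ->
  is_series (fun n => Cpow z n * RtoC (cc n))%C ((1 + z * z) / (1 - z * z))%C.
Proof.
  intro Hz.
  assert (HB : forall n, Cmod (RtoC (cc n)) <= 2).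
  { intro n. rewrite Cmod_R. pose proof (cc_bound n). rewrite Rabs_pos_eq; lra. }
  destruct (ex_geom_C (fun n => RtoC (cc n)) z 2 Hz HB) as [l Hl].
  set (u := fun n => (Cpow z n * RtoC (cc n))%C) in *.
  assert (Hzz : Cmod (z * z) < 1).
  { rewrite Cmod_mult. pose proof (Cmod_ge_0 z). nra. }
  assert (H1 : (1 - z * z)%C <> 0%C).
  { intro E. apply Ceq_minus in E. rewrite <- E, Cmod_1 in Hzz. lra. }
  assert (Hsh : is_series (fun k => u (2 + k)%nat) (l - (u 0%nat + u 1%nat))%C).
  { apply is_series_incr_n. lia. simpl Init.Nat.pred. rewrite sum_Sn, sum_O.
    change (is_series u (Cplus (Cminus l (u 0%nat + u 1%nat)%C) (Cplus (u 0%nat) (u 1%nat)))).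
    rewrite Csub_add. exact Hl. }
  pose proof (is_series_scal (z * z)%C _ _ Hl) as Hsc.
  pose proof (is_series_minus _ _ _ _ Hsh Hsc) as Hd.
  apply series_single in Hd.
  2: { intro n. change (Cplus (u (2 + S n)%nat) (Copp ((z * z) * u (S n)))%C = 0%C).
       unfold u. replace (cc (2 + S n)%nat) with (cc (S n)) by reflexivity. simpl Cpow. ring. }
  change ((Cplus (l - (u 0%nat + u 1%nat)) (Copp ((z * z) * l)))%C = Cplus (u (2 + 0)%nat) (Copp ((z * z) * u 0%nat)))%C in Hd.
  unfold u in Hd. simpl cc in Hd. simpl Cpow in Hd.
  assert (E : l = ((1 + z * z) / (1 - z * z))%C).
  { assert (E2 : (l * (1 - z * z))%C = (1 + z * z)%C).
    { transitivity ((l - (1 * 1 + z * 1 * 0) + - (z * z * l)) + (1 + z * z) - (z * (z * 1) * 2 + - (z * z * (1 * 1))))%C.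
      ring. rewrite Hd. ring. }
    rewrite <- E2. field. exact H1. }
  rewrite <- E. exact Hl.
Qed.

Lemma Re_pos (z : C) : Cmod z < 1 -> 0 < Re ((1 + z * z) / (1 - z * z))%C.
Proof.
  intro Hz.
  assert (Hzz : Cmod (z * z) < 1) by (rewrite Cmod_mult; pose proof (Cmod_ge_0 z); nra).
  set (u := (z * z)%C) in *. clearbody u. destruct u as [x y].
  assert (Hxy : x ^ 2 + y ^ 2 < 1).
  { unfold Cmod in Hzz. simpl in Hzz. pose proof (sqrt_pos (x * (x * 1) + y * (y * 1))).
    assert (0 <= x * (x * 1) + y * (y * 1)) by nra.
    pose proof (sqrt_sqrt _ H0). simpl. nra. }
  assert (Hx : x < 1) by nra.
  unfold Cdiv, Cmult, Cinv, Cplus, Cminus, Copp, RtoC, Re. simpl.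
  set (Dn := (1 + - x) * ((1 + - x) * 1) + (0 + - y) * ((0 + - y) * 1)).
  assert (HD : 0 < Dn) by (unfold Dn; nra).
  replace ((1 + x) * ((1 + - x) / Dn) - (0 + y) * (- (0 + - y) / Dn)) with ((1 - x^2 - y^2) / Dn)
    by (field; lra).
  apply Rdiv_lt_0_compat; lra.
Qed.

Lemma pcoef_b2 beta n : 0 <= beta <= 1 -> pcoef beta (b2 beta) n = RtoC (cc n).
Proof.
  intro Hb. rewrite pcoef_R. simpl b2. rewrite <- RtoC_mult. f_equal.
  pose proof (pos_INR n). assert (1 <= INR n + 1 - INR n * beta) by nra.
  field. lra.
Qed.

Lemma ODE beta z D : 0 <= beta <= 1 -> Cmod z < 1 -> z <> 0%C ->
  is_pseries (dcoef (b2 beta)) z D ->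
  (RtoC beta * (f2 beta z / z) + RtoC (1 - beta) * D)%C = ((1 + z * z) / (1 - z * z))%C.
Proof.
  intros Hb Hz Hz0 HD.
  pose proof (PZ beta (f2 beta) (b2 beta) z D (HT_f2 beta Hb) eq_refl Hz Hz0 HD) as H.
  apply pseries_C in H.
  apply (series_unique_C (fun n => Cpow z n * RtoC (cc n))%C).
  - eapply is_series_ext. 2: exact H. intro n. simpl. rewrite pcoef_b2 by exact Hb. reflexivity.
  - apply GEO. exact Hz.
Qed.

Lemma part2 beta : 0 <= beta <= 1 ->
  (exists (f : C -> C) (a : nat -> C),
      A_beta beta f /\ taylor_on_disk f a /\
      (forall z : C, in_unit_disk z -> z <> 0%C ->
         exists d : C, is_derive (K := C_AbsRing) (V := C_NormedModule) f z d /\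
           (RtoC beta * (f z / z) + RtoC (1 - beta) * d)%C
             = ((1 + z * z) / (1 - z * z))%C) /\
      Cmod (a 3%nat - a 2%nat * a 2%nat)%C = 2 / (3 - 2 * beta)).
Proof.
  intro Hb.
  assert (Hode : forall z : C, in_unit_disk z -> z <> 0%C ->
         exists d : C, is_derive (K := C_AbsRing) (V := C_NormedModule) (f2 beta) z d /\
           (RtoC beta * (f2 beta z / z) + RtoC (1 - beta) * d)%C
             = ((1 + z * z) / (1 - z * z))%C).
  { intros z Hz Hz0. destruct (DER (f2 beta) (b2 beta) z (HT_f2 beta Hb) Hz) as [D [HD1 HD2]].
    exists D. split. exact HD2. apply ODE; assumption. }
  exists (f2 beta), (b2 beta). split; [|split; [|split]].
  - split.
    + exists (b2 beta). split. exact (HT_f2 beta Hb). split. reflexivity.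
      simpl. f_equal. field.
    + intros z Hz Hz0. destruct (Hode z Hz Hz0) as [d [Hd1 Hd2]]. exists d. split. exact Hd1.
      rewrite Hd2. apply Re_pos. exact Hz.
  - exact (HT_f2 beta Hb).
  - exact Hode.
  - simpl b2. unfold cc. simpl Nat.even.
    replace (RtoC (2 / (1 + 1 + 1 - (1 + 1) * beta)) - RtoC (0 / (1 + 1 - 1 * beta)) * RtoC (0 / (1 + 1 - 1 * beta)))%C
      with (RtoC (2 / (3 - 2 * beta))).
    rewrite Cmod_R. apply Rabs_pos_eq. apply Rdiv_le_0_compat; lra.
    rewrite <- RtoC_mult, <- RtoC_minus. f_equal. field. lra.
Qed.

Theorem mainTheorem6 (beta : R) (Hb0 : 0 <= beta) (Hb1 : beta <= 1) :
  (forall (f : C -> C) (a : nat -> C),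
      A_beta beta f -> taylor_on_disk f a ->
      Cmod (a 3%nat - a 2%nat * a 2%nat)%C <= 2 / (3 - 2 * beta))
  /\
  (* sharpness: the extremal function f_2 *)
  (exists (f2 : C -> C) (a : nat -> C),
      A_beta beta f2 /\ taylor_on_disk f2 a /\
      (forall z : C, in_unit_disk z -> z <> 0%C ->
         exists d : C, is_derive (K := C_AbsRing) (V := C_NormedModule) f2 z d /\
           (RtoC beta * (f2 z / z) + RtoC (1 - beta) * d)%C
             = ((1 + z * z) / (1 - z * z))%C) /\
      Cmod (a 3%nat - a 2%nat * a 2%nat)%C = 2 / (3 - 2 * beta)).
Proof.
  split.
  - intros f a Hf Ht. exact (part1 beta f a (conj Hb0 Hb1) Hf Ht).
  - exact (part2 beta (conj Hb0 Hb1)).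
Qed.
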